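(* Let $\gamma:S^1\to\mathbb{R}^{2d}$ be a closed symplectically convex curve parametrized so that $\omega(\gamma'(t),\gamma''(t))=1$, and let $\Sigma=\{P:\exists t\in S^1,\ \omega(P-\gamma(t),\gamma'(t))=0,\ \omega(P-\gamma(t),\gamma''(t))=0\}$ be the wall. Then in a sufficiently small neighborhood of $\gamma$ the local multiplicity is either $0$ or $2$: every point $P\notin\Sigma$ sufficiently close to $\gamma$ either cannot be written as $P=\gamma(t)+v$ with $\omega(\gamma'(t),v)=0$, or can be written in this way in precisely two different ways, where in both cases one only considers representations with $\gamma(t)$ close to $P$ and $v$ small.
   Context: $\mathbb{R}^{2d}$ carries its standard symplectic form $\omega$; $\gamma$ is symplectically convex if $\omega(\gamma'(t),\gamma''(t))>0$ for all $t$. The multiplicity at a regular value $P$ of $\Psi(v,t)=\gamma(t)+v$ (defined on $\{(v,t):\omega(v,\gamma'(t))=0\}$) is the number of its preimages, i.e. of representations $P=\gamma(t)+v$ with $\omega(\gamma'(t),v)=0$; $\Sigma$ is the set of singular values of $\Psi$. *)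

(* Defs.v *)
From HB Require Import structures.
From mathcomp Require Import all_boot all_order all_algebra.
From mathcomp Require Import all_classical all_reals all_analysis.
Set Implicit Arguments. Unset Strict Implicit. Unset Printing Implicit Defensive.
Import Order.TTheory GRing.Theory Num.Theory.
Import numFieldNormedType.Exports.
Local Open Scope ring_scope.

(* R^{2d} is modelled as row vectors of length d + d: coordinates
   (q_1..q_d, p_1..p_d).  Standard symplectic form
   omega(x,y) = sum_i (q_i(x) p_i(y) - p_i(x) q_i(y)). *)
Definition omega {R : realType} {d : nat} (x y : 'rV[R]_(d + d)) : R :=
  \sum_(i < d) (x ord0 (lshift d i) * y ord0 (rshift d i)
                - x ord0 (rshift d i) * y ord0 (lshift d i)).

Definition smooth_curve {R : realType} {n : nat} (g : R -> 'rV[R]_n) : Prop :=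
  forall (k : nat) (t : R), derivable (derive1n k g) t 1.

(* closed curve: g : R -> R^n periodic of period L > 0, i.e. a map S^1 = R/LZ -> R^n *)
Definition closed_curve {R : realType} {n : nat} (g : R -> 'rV[R]_n) (L : R) : Prop :=
  0 < L /\ forall t, g (t + L) = g t.

Definition wall {R : realType} {d : nat} (g : R -> 'rV[R]_(d + d)) (P : 'rV[R]_(d + d))
  : Prop :=
  exists t : R, omega (P - g t) (derive1 g t) = 0 /\ omega (P - g t) (derive1n 2 g t) = 0.

(* parameters t with P = g t + v, omega (g' t) v = 0 (v := P - g t) *)
Definition representation {R : realType} {d : nat} (g : R -> 'rV[R]_(d + d))
  (P : 'rV[R]_(d + d)) (t : R) : Prop :=
  omega (derive1 g t) (P - g t) = 0.

Definition card0or2 {T : Type} (A : T -> Prop) : Prop :=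
  (forall t, ~ A t) \/
  (exists t1 t2, t1 <> t2 /\ A t1 /\ A t2 /\ forall t, A t -> t = t1 \/ t = t2).

(* Main.v *)
Require Import Defs.
From HB Require Import structures.
From mathcomp Require Import all_boot all_order all_algebra.
From mathcomp Require Import all_classical all_reals all_analysis.
From mathcomp Require Import ring lra.
Import Order.TTheory GRing.Theory Num.Theory.
Import numFieldNormedType.Exports.
Local Open Scope ring_scope.

Section Calc.
Context {R : realType}.
Implicit Types f g : R -> R.

Lemma dD f g (x a b : R) : is_derive x (1:R) f a -> is_derive x (1:R) g b ->
  is_derive x (1:R) (fun y => f y + g y) (a + b).
Proof. move=> ha hb; exact: is_deriveD. Qed.

Lemma dB f g (x a b : R) : is_derive x (1:R) f a -> is_derive x (1:R) g b ->
  is_derive x (1:R) (fun y => f y - g y) (a - b).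
Proof. move=> ha hb; exact: is_deriveB. Qed.

Lemma dM f g (x a b : R) : is_derive x (1:R) f a -> is_derive x (1:R) g b ->
  is_derive x (1:R) (fun y => f y * g y) (f x * b + g x * a).
Proof. move=> ha hb; exact: is_deriveM. Qed.

Lemma dC (k x : R) : is_derive x (1:R) (fun _ : R => k) 0.
Proof. exact: is_derive_cst. Qed.

Lemma dI (x : R) : is_derive x (1:R) (fun y : R => y) 1.
Proof. exact: is_derive_id. Qed.

Lemma dcont f df : (forall x, is_derive x (1:R) f (df x)) -> continuous f.
Proof.
move=> D x; apply/differentiable_continuous/derivable1_diffP.
by have [] := D x.
Qed.

Lemma mvt f df (a b : R) : (forall x, is_derive x (1:R) f (df x)) ->
  exists c, ((a <= c <= b) \/ (b <= c <= a)) /\ f b - f a = df c * (b - a).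
Proof.
move=> D; case: (lerP a b) => ab.
  have [|c] := MVT_segment ab (fun x _ => D x).
    by apply: continuous_subspaceT; exact: dcont D.
  rewrite in_itv /= => cab e; exists c; by split => //; left.
have [|c] := MVT_segment (ltW ab) (fun x _ => D x).
  by apply: continuous_subspaceT; exact: dcont D.
rewrite in_itv /= => cab e; exists c; split; first by right.
by rewrite -opprB e -mulrN opprB.
Qed.
End Calc.
Arguments dD {R f g x a b}.
Arguments dB {R f g x a b}.
Arguments dM {R f g x a b}.
Arguments dC {R}.
Arguments dI {R}.
Arguments mvt {R f df}.
Arguments dcont {R f df}.

Section Calc2.
Context {R : realType}.
Implicit Types f g : R -> R.

Definition btw (x t u : R) := (x <= u <= t) \/ (t <= u <= x).

Lemma btw_trans {x t u v} : btw x t u -> btw x u v -> btw x t v.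
Proof. rewrite /btw => -[/andP[h1 h2]|/andP[h1 h2]] [/andP[h3 h4]|/andP[h3 h4]].
- by left; apply/andP; split; lra.
- by left; apply/andP; split; lra.
- by right; apply/andP; split; lra.
- by right; apply/andP; split; lra.
Qed.

Lemma btw_mul {x t u} : btw x t u -> 0 <= (u - x) * (t - x).
Proof.
rewrite /btw => -[/andP[h1 h2]|/andP[h1 h2]].
  by apply: mulr_ge0; lra.
by apply: mulr_le0; lra.
Qed.

Lemma taylor f f1 f2 (k x t : R) :
  (forall y, is_derive y (1:R) f (f1 y)) -> (forall y, is_derive y (1:R) f1 (f2 y)) ->
  (forall u, btw x t u -> k <= f2 u) ->
  f x + f1 x * (t - x) + k / 2 * ((t - x) * (t - x)) <= f t.
Proof.
move=> D1 D2 hk.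
pose h u := f u - f1 x * (u - x) - k / 2 * ((u - x) * (u - x)).
pose h1 u := f1 u - f1 x - k * (u - x).
pose h2 u := f2 u - k.
have Dh y : is_derive y (1:R) h (h1 y).
  have H := (dB (dB (D1 y) (dM (dC (f1 x) y) (dB (dI y) (dC x y))))
               (dM (dC (k/2) y) (dM (dB (dI y) (dC x y)) (dB (dI y) (dC x y))))).
  apply: (is_derive_eq H); rewrite /h1; by field.
have Dh1 z : is_derive z (1:R) h1 (h2 z).
  have H := (dB (dB (D2 z) (dC (f1 x) z)) (dM (dC k z) (dB (dI z) (dC x z)))).
  apply: (is_derive_eq H); rewrite /h2; ring.
have [c [bc ec]] := mvt x t Dh.
have [e [be ee]] := mvt x c Dh1.
have h1x : h1 x = 0 by rewrite /h1; ring.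
have hx : h x = f x by rewrite /h; ring.
rewrite h1x subr0 in ee.
have pe : 0 <= h2 e by rewrite /h2 subr_ge0; apply: hk; exact: btw_trans bc be.
have pc := btw_mul bc.
have : 0 <= h t - h x.
  by rewrite ec ee -mulrA; apply: mulr_ge0.
rewrite hx /h; lra.
Qed.
End Calc2.

Section Count.
Context {R : realType}.

Lemma card_ext {T} (A B : T -> Prop) : (forall t, A t <-> B t) -> card0or2 A -> card0or2 B.
Proof.
move=> e [h|[t1 [t2 [ne [h1 [h2 h3]]]]]].
  by left; move=> t ht; apply: (h t); apply/e.
right; exists t1, t2; split=> //; split; first exact/e.
split; first exact/e.
by move=> t ht; apply: h3; apply/e.
Qed.

Lemma count02 (f f1 f2 : R -> R) (a a' b' b : R) :
  (forall y, is_derive y (1:R) f (f1 y)) -> (forall y, is_derive y (1:R) f1 (f2 y)) ->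
  a < a' -> a' < b' -> b' < b ->
  (forall t, a < t < b -> 0 < f2 t) ->
  (forall t, a < t <= a' -> 0 < f t) ->
  (forall t, b' <= t < b -> 0 < f t) ->
  (forall t, f t = 0 -> f1 t <> 0) ->
  card0or2 (fun t => a < t < b /\ f t = 0).
Proof.
move=> D1 D2 aa' a'b' b'b pos2 posa posb nw.
have cf := dcont D1.
have three x y z : a < x -> x < y -> y < z -> z < b -> f x = 0 -> f y = 0 -> f z = 0 -> False.
  move=> ax xy yz zb fx fy fz.
  have [u [bu eu]] := mvt x y D1.
  have [v [bv ev]] := mvt y z D1.
  have xu : x <= u <= y by case: bu => // /andP[]; lra.
  have yv : y <= v <= z by case: bv => // /andP[]; lra.
  have fu : f1 u = 0.
    move: eu; rewrite fx fy subrr => /esym /eqP; rewrite mulf_eq0 => /orP[/eqP //|].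
    lra.
  have fv : f1 v = 0.
    move: ev; rewrite fz fy subrr => /esym /eqP; rewrite mulf_eq0 => /orP[/eqP //|].
    lra.
  case: (ltrP u v) => uv; last first.
    have uy : u = y by apply/eqP; rewrite eq_le; apply/andP; split; lra.
    by apply: (nw y fy); rewrite -uy.
  have [w [bw ew]] := mvt u v D2.
  have uw : u <= w <= v by case: bw => // /andP[]; lra.
  have : 0 < f2 w by apply: pos2; lra.
  move: ew; rewrite fu fv subrr => /esym /eqP; rewrite mulf_eq0 => /orP[/eqP ->|]; lra.
case: (pselect (exists s, a < s < b /\ f s = 0)) => [[s [sab fs]]|hn]; last first.
  by left; move=> t ht; apply: hn; exists t.
right.
have fa' : 0 < f a' by apply: posa; lra.
have fb' : 0 < f b' by apply: posb; lra.
have sa' : a' < s < b'.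
  apply/andP; split; rewrite ltNge; apply/negP => h.
    suff : 0 < f s by rewrite fs ltxx.
    apply: posa; lra.
  suff : 0 < f s by rewrite fs ltxx.
  apply: posb; lra.
have [m mab minm] := EVT_min (ltW a'b') (continuous_subspaceT cf).
have ma'b' : a' <= m <= b' by move: mab; rewrite in_itv.
have fms : f m <= 0 by rewrite -fs; apply: minm; rewrite in_itv /=; lra.
have fm0 : f m < 0.
  rewrite lt_neqAle fms andbT; apply/eqP => fm.
  have ma : m != a' by apply/eqP => ma; move: fa'; rewrite -ma fm; lra.
  have mb : m != b' by apply/eqP => mb; move: fb'; rewrite -mb fm; lra.
  have mi : m \in `]a', b'[.
    rewrite in_itv /= !lt_neqAle; move: ma'b' => /andP[-> ->].
    by rewrite eq_sym ma mb.
  have := derive1_at_min (ltW a'b') (fun t _ => @ex_derive _ _ _ _ _ _ _ (D1 t)) mi.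
  move=> /(_ (fun t ht => minm t (subset_itv_oo_cc ht))) dm.
  have : f1 m = 0.
    have := @derive_val _ _ _ _ _ _ _ (D1 m).
    by rewrite (@derive_val _ _ _ _ _ _ _ dm).
  exact: nw.
have [c1 c1i fc1] : exists2 c, c \in `[a', m] & f c = 0.
  apply: IVT; first lra.
    exact: continuous_subspaceT.
  by rewrite ge_min le_max; apply/andP; split; apply/orP; [right|left]; lra.
have [c2 c2i fc2] : exists2 c, c \in `[m, b'] & f c = 0.
  apply: IVT; first lra.
    exact: continuous_subspaceT.
  by rewrite ge_min le_max; apply/andP; split; apply/orP; [left|right]; lra.
move: c1i c2i; rewrite !in_itv /= => /andP[c1a c1m] /andP[c2m c2b].
have c1m' : c1 < m by rewrite lt_neqAle c1m andbT; apply/eqP => e; move: fm0; rewrite -e; lra.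
have c2m' : m < c2 by rewrite lt_neqAle c2m andbT; apply/eqP => e; move: fm0; rewrite e; lra.
exists c1, c2; split; first lra.
split; first by split => //; lra.
split; first by split => //; lra.
move=> t [tab ft].
case: (eqVneq t c1) => [->|n1]; first by left.
case: (eqVneq t c2) => [->|n2]; first by right.
exfalso.
case: (ltrP t c1) => h1.
  by apply: (three t c1 c2) => //; lra.
case: (ltrP t c2) => h2.
  have h1' : c1 < t by rewrite lt_neqAle h1 eq_sym n1.
  by apply: (three c1 t c2) => //; lra.
have h2' : c2 < t by rewrite lt_neqAle h2 eq_sym n2.
by apply: (three c1 c2 t) => //; lra.
Qed.
End Count.

Section Omega.
Context {R : realType} {d : nat}.
Notation V := 'rV[R]_(d + d).
Implicit Types x y z : V.

Lemma omega_anti x y : omega x y = - omega y x.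
Proof. rewrite /omega -sumrN; apply: eq_bigr => i _; ring. Qed.

Lemma omega_xx x : omega x x = 0.
Proof. rewrite /omega big1 // => i _; ring. Qed.

Lemma omegaDr x y z : omega x (y + z) = omega x y + omega x z.
Proof. rewrite /omega -big_split /=; apply: eq_bigr => i _; rewrite !mxE; ring. Qed.

Lemma omegaNr x y : omega x (- y) = - omega x y.
Proof. rewrite /omega -sumrN; apply: eq_bigr => i _; rewrite !mxE; ring. Qed.

Lemma omegaBr x y z : omega x (y - z) = omega x y - omega x z.
Proof. by rewrite omegaDr omegaNr. Qed.

Lemma entry_le x j : `|x ord0 j| <= `|x|.
Proof.
rewrite [leRHS]/Num.Def.normr /= mx_normrE.
exact: (le_bigmax _ _ (ord0, j)).
Qed.

Lemma omega_bound x y : `|omega x y| <= (d + d)%:R * (`|x| * `|y|).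
Proof.
rewrite /omega; apply: le_trans (ler_norm_sum _ _ _) _.
apply: le_trans (_ : \sum_(i < d) (`|x| * `|y| + `|x| * `|y|) <= _).
  apply: ler_sum => i _; apply: le_trans (ler_normB _ _) _.
  rewrite !normrM; apply: lerD; apply: ler_pM => //; exact: entry_le.
rewrite sumr_const card_ord -mulr_natl natrD; rewrite le_eqVlt; apply/orP; left; apply/eqP; ring.
Qed.

End Omega.

Section OmegaD.
Context {R : realType} {d : nat}.
Notation V := 'rV[R]_(d + d).

Lemma dBv (f g : R -> V) (x : R) (a b : V) : is_derive x (1:R) f a -> is_derive x (1:R) g b ->
  is_derive x (1:R) (fun y => f y - g y) (a - b).
Proof. move=> ha hb; exact: is_deriveB. Qed.

Lemma dCv (c : V) (x : R) : is_derive x (1:R) (fun _ : R => c) 0.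
Proof. exact: is_derive_cst. Qed.

Lemma is_derive_entry (a : R -> V) (t : R) (A : V) j :
  is_derive t (1:R) a A -> is_derive t (1:R) (fun s => a s ord0 j) (A ord0 j).
Proof.
move=> h.
have da : derivable a t 1 := @ex_derive _ _ _ _ _ _ _ h.
have dj := (derivable_mxP a t 1).1 da ord0 j.
have H := derivableP dj; apply: (is_derive_eq H).
have e := derive_mx da.
rewrite (@derive_val _ _ _ _ _ _ _ h) in e.
by rewrite e mxE.
Qed.

Lemma is_derive_omega (a b : R -> V) (t : R) (A B : V) :
  is_derive t (1:R) a A -> is_derive t (1:R) b B ->
  is_derive t (1:R) (fun s => omega (a s) (b s)) (omega A (b t) + omega (a t) B).
Proof.
move=> ha hb.
pose h (i : 'I_d) (s : R) := a s ord0 (lshift d i) * b s ord0 (rshift d i)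
   - a s ord0 (rshift d i) * b s ord0 (lshift d i).
have H := @is_derive_sum _ _ _ d h t 1 _ (fun i =>
   dB (dM (is_derive_entry _ _ _ (lshift d i) ha) (is_derive_entry _ _ _ (rshift d i) hb))
      (dM (is_derive_entry _ _ _ (rshift d i) ha) (is_derive_entry _ _ _ (lshift d i) hb))).
have e : (\sum_(i < d) h i) = (fun s => omega (a s) (b s)).
  by apply/funext => s; rewrite fct_sumE.
rewrite e in H; apply: (is_derive_eq H).
rewrite /omega -big_split /=; apply: eq_bigr => i _; ring.
Qed.
End OmegaD.
Arguments dBv {R d f g x a b}.
Arguments dCv {R d}.
Arguments is_derive_omega {R d a b t A B}.
Arguments is_derive_entry {R d a t A}.

Section Curve.
Context {R : realType} {n : nat}.
Notation V := 'rV[R]_n.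

Lemma Dk (g : R -> V) : smooth_curve g -> forall k t,
  is_derive t (1:R) (derive1n k g) (derive1n k.+1 g t).
Proof.
move=> sm k t; have h := derivableP (sm k t).
by rewrite derive1nS derive1E.
Qed.

Lemma per_derive1 (h : R -> V) (L : R) : (forall s, h (s + L) = h s) ->
  forall t, derive1 h (t + L) = derive1 h t.
Proof.
move=> hL t; rewrite /derive1.
have -> : (fun x : R => x^-1 *: (h (x + (t + L)) - h (t + L))) = (fun x => x^-1 *: (h (x + t) - h t)).
  by apply/funext => x; rewrite addrA !hL.
by [].
Qed.

Lemma per_derive1n (g : R -> V) (L : R) : (forall s, g (s + L) = g s) ->
  forall k t, derive1n k g (t + L) = derive1n k g t.
Proof.
move=> hL; elim=> [|k IH] t; first by rewrite !derive1n0.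
rewrite !derive1nS; exact: per_derive1.
Qed.

Lemma per_nat (h : R -> V) (L : R) : (forall s, h (s + L) = h s) ->
  forall (m : nat) t, h (t + m%:R * L) = h t.
Proof.
move=> hL; elim=> [|m IH] t; first by rewrite mul0r addr0.
by rewrite -natr1 mulrDl mul1r addrA hL IH.
Qed.

Lemma per_reduce (h : R -> V) (L : R) : 0 < L -> (forall s, h (s + L) = h s) ->
  forall t, exists s, 0 <= s <= L /\ h t = h s.
Proof.
move=> L0 hL t.
have := floor_itv (t / L).
set z := Num.floor (t / L) => /andP[h1 h2].
have tL : t = t / L * L by field; lra.
have a1 : z%:~R * L <= t by rewrite [leRHS]tL; apply: ler_wpM2r => //; lra.
have a2 : t < (z + 1)%:~R * L by rewrite [ltLHS]tL ltr_pM2r.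
rewrite intrD in a2.
exists (t - z%:~R * L); split; first by apply/andP; split; lra.
clear h1 h2 tL; clearbody z; case: z a1 a2 => m a1 a2.
  by rewrite -[in LHS](subrK (m%:~R * L) t) per_nat.
rewrite NegzE mulrNz mulNr opprK per_nat //.
Qed.

Lemma bound_k (g : R -> V) (L : R) : 0 < L -> smooth_curve g -> (forall s, g (s + L) = g s) ->
  forall k, exists M, 1 <= M /\ forall t, `|derive1n k g t| <= M.
Proof.
move=> L0 sm hL k.
have cg : continuous (derive1n k g).
  move=> x; apply/differentiable_continuous/derivable1_diffP.
  exact: sm k x.
have cn : continuous (fun t => `|derive1n k g t|).
  move=> x; apply: continuous_comp; [exact: cg| exact: norm_continuous].
have [c _ hc] := EVT_max (ltW L0) (continuous_subspaceT cn).
exists (Num.max 1 (`|derive1n k g c|)); split; first by rewrite le_max lexx.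
move=> t; have [s [hs ->]] := per_reduce _ _ L0 (per_derive1n _ _ hL k) t.
rewrite le_max; apply/orP; right; apply: hc; by rewrite in_itv.
Qed.
End Curve.
Arguments bound_k {R n g L}.
Arguments Dk {R n g}.

Lemma omega_x0 {R : realType} {d : nat} (x : 'rV[R]_(d + d)) : omega x 0 = 0.
Proof. rewrite /omega big1 // => i _; rewrite !mxE; ring. Qed.

Lemma omega_0x {R : realType} {d : nat} (x : 'rV[R]_(d + d)) : omega 0 x = 0.
Proof. rewrite /omega big1 // => i _; rewrite !mxE; ring. Qed.

Lemma nprod {R : realType} (x y a b : R) : `|x| <= a -> `|y| <= b -> `|x * y| <= a * b.
Proof. move=> h1 h2; rewrite normrM; apply: ler_pM => //. Qed.

Lemma core {R : realType} {d : nat} (gamma g1 g2 g3 : R -> 'rV[R]_(d + d)) (M : R) :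
  1 <= M -> (forall t, `|g1 t| <= M) -> (forall t, `|g2 t| <= M) -> (forall t, `|g3 t| <= M) ->
  (forall t, is_derive t (1:R) gamma (g1 t)) ->
  (forall t, is_derive t (1:R) g1 (g2 t)) ->
  (forall t, is_derive t (1:R) g2 (g3 t)) ->
  (forall t, omega (g1 t) (g2 t) = 1) ->
  exists delta eps : R, 0 < delta /\ 0 < eps /\
    forall (t0 : R) (P : 'rV[R]_(d + d)),
      `|P - gamma t0| < eps ->
      ~ (exists t, omega (P - gamma t) (g1 t) = 0 /\ omega (P - gamma t) (g2 t) = 0) ->
      card0or2 (fun t : R => `|t - t0| < delta /\ omega (g1 t) (P - gamma t) = 0).
Proof.
move=> M1' Bg1 Bg2 Bg3 Dg Dg1 Dg2 h1.
pose C := (d + d)%:R + 1 : R.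
have C1 : 1 <= C by rewrite /C lerDr.
pose K := C * M * M.
have K1 : 1 <= K by rewrite /K; apply: mulr_ege1 => //; apply: mulr_ege1.
have K0 : 0 < K by lra.
pose de := 1 / (4 * K).
have de0 : 0 < de by rewrite /de divr_gt0 //; lra.
have Kde : K * de = 1 / 4 by rewrite /de; field; lra.
have de1 : de <= 1 / 4.
  have : de * 1 <= de * K by apply: ler_wpM2l; lra.
  by rewrite mulr1 mulrC Kde.
pose ep := de * de / (64 * K).
have ep0 : 0 < ep by rewrite /ep divr_gt0 //; [apply: mulr_gt0 | lra].
have Kep : K * ep = de * de / 64 by rewrite /ep; field; lra.
have dd0 : 0 <= de * de by apply: mulr_ge0; lra.
have dd1 : de * de <= de by rewrite -[leRHS]mulr1; apply: ler_wpM2l; lra.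
have oB (x y : 'rV[R]_(d + d)) a b : `|x| <= a -> `|y| <= b -> `|omega x y| <= C * (a * b).
  move=> ha hb; apply: le_trans (omega_bound x y) _.
  apply: ler_pM; [exact: ler0n | by rewrite mulr_ge0 | by rewrite /C lerDl | by apply: ler_pM].
have CMe e : 0 <= e -> C * (M * e) <= K * e.
  move=> e0; rewrite /K mulrA -!mulrA; apply: ler_wpM2l; first lra.
  have Me : 0 <= M * e by apply: mulr_ge0 => //; lra.
  by have := ler_wpM2r Me M1'; rewrite mul1r.
exists de, ep; split => //; split => // t0 P hP nw.
pose f t := omega (g1 t) (P - gamma t).
pose f1 t := omega (g2 t) (P - gamma t).
pose f2 t := omega (g3 t) (P - gamma t) + 1.
have Dp t : is_derive t (1:R) (fun s => P - gamma s) (0 - g1 t) := dBv (dCv P t) (Dg t).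
have Df t : is_derive t (1:R) f (f1 t).
  have H := is_derive_omega (Dg1 t) (Dp t).
  rewrite sub0r omegaNr omega_xx oppr0 addr0 in H.
  exact: H.
have Df1 t : is_derive t (1:R) f1 (f2 t).
  have H := is_derive_omega (Dg2 t) (Dp t).
  rewrite sub0r omegaNr (omega_anti (g2 t)) h1 opprK in H.
  exact: H.
have f2b t : `|t - t0| < de -> `|f2 t - 1| <= 1/2.
  move=> ht; rewrite /f2 addrK.
  have -> : P - gamma t = (P - gamma t0) + (gamma t0 - gamma t) by rewrite addrA subrK.
  rewrite omegaDr.
  have T1 : `|omega (g3 t) (P - gamma t0)| <= K * ep.
    apply: le_trans (CMe _ (ltW ep0)); exact: oB (Bg3 t) (ltW hP).
  pose u r := omega (g3 t) (gamma t0 - gamma r).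
  pose du r := omega (g3 t) (0 - g1 r).
  have Du r : is_derive r (1:R) u (du r).
    have H := is_derive_omega (dCv (g3 t) r) (dBv (dCv (gamma t0) r) (Dg r)).
    rewrite omega_0x add0r in H.
    exact: H.
  have [c [_ ec]] := mvt t0 t Du.
  have ut0 : u t0 = 0 by rewrite /u subrr omega_x0.
  rewrite ut0 subr0 in ec.
  have T2 : `|u t| <= K * de.
    rewrite ec; apply: nprod; last exact: ltW.
    rewrite /K -mulrA; apply: oB => //.
    by rewrite sub0r normrN.
  have T3 := ler_normD (omega (g3 t) (P - gamma t0)) (u t).
  rewrite -/(u t); lra.
have f2p t : `|t - t0| < de -> 1/2 <= f2 t.
  move=> /f2b; rewrite ler_norml => /andP[h _]; lra.
have f0b : `|f t0| <= K * ep.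
  apply: le_trans (CMe _ (ltW ep0)); exact: oB (Bg1 t0) (ltW hP).
have f1b : `|f1 t0| <= K * ep.
  apply: le_trans (CMe _ (ltW ep0)); exact: oB (Bg2 t0) (ltW hP).
have posf t : `|t - t0| < de -> de / 2 <= `|t - t0| -> 0 < f t.
  move=> ht hl.
  have hk : forall u, btw t0 t u -> 1/2 <= f2 u.
    move=> u bu; apply: f2p; move: ht; rewrite !ltr_norml.
    by case: bu => /andP[? ?] /andP[? ?]; apply/andP; split; lra.
  have T := @taylor R f f1 f2 (1/2) t0 t Df Df1 hk.
  have T1 := lerNnormlW f0b.
  have T2 : - (K * ep * 1) <= f1 t0 * (t - t0).
    apply: lerNnormlW; apply: nprod => //; move: ht; rewrite ltr_norml ler_norml => /andP[? ?].
    by apply/andP; split; lra.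
  have hsq : `|t - t0| * `|t - t0| = (t - t0) * (t - t0).
    by rewrite -normrM ger0_norm // -expr2 sqr_ge0.
  have T3 : de / 2 * (de / 2) <= (t - t0) * (t - t0).
    by rewrite -hsq; apply: ler_pM => //; lra.
  have ddp : 0 < de * de by apply: mulr_gt0.
  lra.
have nw' t : f t = 0 -> f1 t <> 0.
  move=> ft f1t; apply: nw; exists t; split.
    by rewrite omega_anti; move: ft; rewrite /f => ->; rewrite oppr0.
  by rewrite omega_anti; move: f1t; rewrite /f1 => ->; rewrite oppr0.
have H := @count02 R f f1 f2 (t0 - de) (t0 - de / 2) (t0 + de / 2) (t0 + de) Df Df1.
have pos2 : forall t, t0 - de < t < t0 + de -> 0 < f2 t.
  move=> t /andP[ta tb]; have : 1/2 <= f2 t; last lra.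
  by apply: f2p; rewrite ltr_norml; apply/andP; split; lra.
have posa : forall t, t0 - de < t <= t0 - de / 2 -> 0 < f t.
  move=> t /andP[ta tb]; apply: posf.
    rewrite ltr_norml; apply/andP; split; lra.
  rewrite ler_normr; apply/orP; right; lra.
have posb : forall t, t0 + de / 2 <= t < t0 + de -> 0 < f t.
  move=> t /andP[ta tb]; apply: posf.
    rewrite ltr_norml; apply/andP; split; lra.
  rewrite ler_normr; apply/orP; left; lra.
have C0 := H ltac:(lra) ltac:(lra) ltac:(lra) pos2 posa posb nw'.
apply: (card_ext _ _ _ C0) => t; rewrite ltr_norml.
split => -[h1' h2']; split => //; move: h1' => /andP[? ?]; apply/andP; split; lra.
Qed.

Theorem mainTheorem16 (R : realType) (d : nat) (gamma : R -> 'rV[R]_(d + d)) (L : R) :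
  closed_curve gamma L ->
  smooth_curve gamma ->
  (forall t, omega (derive1 gamma t) (derive1n 2 gamma t) = 1) ->
  exists delta eps : R, 0 < delta /\ 0 < eps /\
    forall (t0 : R) (P : 'rV[R]_(d + d)),
      `|P - gamma t0| < eps ->
      ~ wall gamma P ->
      card0or2 (fun t : R => `|t - t0| < delta /\ representation gamma P t).
Proof.
move=> [L0 per] sm h1.
have [M1 [M1g B1]] := bound_k L0 sm per 1.
have [M2 [M2g B2]] := bound_k L0 sm per 2.
have [M3 [M3g B3]] := bound_k L0 sm per 3.
have B1' t : `|derive1 gamma t| <= M1 + M2 + M3.
  rewrite -derive1n1; apply: le_trans (B1 t) _; lra.
have B2' t : `|derive1n 2 gamma t| <= M1 + M2 + M3.
  apply: le_trans (B2 t) _; lra.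
have B3' t : `|derive1n 3 gamma t| <= M1 + M2 + M3.
  apply: le_trans (B3 t) _; lra.
have Dg t : is_derive t (1:R) gamma (derive1 gamma t).
  have := Dk sm 0 t; by rewrite derive1n0 derive1n1.
have Dg1 t : is_derive t (1:R) (derive1 gamma) (derive1n 2 gamma t).
  have := Dk sm 1 t; by rewrite derive1n1.
have Dg2 t : is_derive t (1:R) (derive1n 2 gamma) (derive1n 3 gamma t) := Dk sm 2 t.
have M0 : 1 <= M1 + M2 + M3 by lra.
exact: (core gamma (derive1 gamma) (derive1n 2 gamma) (derive1n 3 gamma) (M1 + M2 + M3) M0 B1' B2' B3' Dg Dg1 Dg2 h1).
Qed.
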